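(* Let $n\geq 1$ and let $M$ be a complex $n\times n$ matrix. Then $M$ is a complex Hadamard matrix if and only if every entry of $M$ has complex norm $1$ and every eigenvalue of $M$ has complex norm $\sqrt{n}$.
   Context: A complex Hadamard matrix of order $n$ is an $n\times n$ complex matrix $M$ all of whose entries have complex norm $1$ and which satisfies $MM^{\ast}=nI_n$, where $M^\ast$ is the conjugate transpose of $M$ and $I_n$ the identity matrix. *)

(* Defs.v *)
From HB Require Import structures.
From mathcomp Require Import all_boot all_order all_algebra.
From mathcomp Require Import reals.
From mathcomp.real_closed Require Import complex.
Set Implicit Arguments. Unset Strict Implicit. Unset Printing Implicit Defensive.
Import Order.TTheory GRing.Theory Num.Theory.
Local Open Scope ring_scope.

Definition conjT (C : numClosedFieldType) (n : nat) (M : 'M[C]_n) : 'M[C]_n :=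
  (map_mx Num.conj M)^T.

Definition complex_hadamard (C : numClosedFieldType) (n : nat) (M : 'M[C]_n) : Prop :=
  (forall i j, `|M i j| = 1) /\ M *m conjT M = n%:R%:M.

(* Main.v *)
Require Import Defs.
From HB Require Import structures.
From mathcomp Require Import all_boot all_order all_algebra.
From mathcomp Require Import reals.
From mathcomp.real_closed Require Import complex.
From mathcomp Require Import sesquilinear spectral mxred ring.
Set Implicit Arguments. Unset Strict Implicit. Unset Printing Implicit Defensive.
Import Order.TTheory GRing.Theory Num.Theory.
Local Open Scope ring_scope.
Local Open Scope sesquilinear_scope.

Section S.
Variable C : numClosedFieldType.

Lemma conjTE n (M : 'M[C]_n) : conjT M = M ^t*.
Proof. by rewrite /conjT map_trmx. Qed.

Lemma tr_self m n (A : 'M[C]_(m, n)) :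
  \tr (A *m A ^t*) = \sum_i \sum_j `|A i j| ^+ 2.
Proof.
rewrite /mxtrace; apply: eq_bigr => i _; rewrite !mxE.
by apply: eq_bigr => j _; rewrite !mxE normCK.
Qed.

Lemma unitary_l n (P : 'M[C]_n) : P \is unitarymx -> P ^t* *m P = 1%:M.
Proof. by move=> Pu; have := mulmxKtV (1%:M : 'M[C]_n) Pu erefl; rewrite mul1mx. Qed.

Lemma tr_mul_t m n p (A : 'M[C]_(m, n)) (B : 'M[C]_(n, p)) :
  (A *m B) ^t* = B ^t* *m A ^t*.
Proof. by rewrite trmx_mul map_mxM. Qed.


Lemma forward n (M : 'M[C]_n) :
  M *m M ^t* = n%:R%:M ->
  forall lambda : C, eigenvalue M lambda -> `|lambda| = sqrtC (n%:R : C).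
Proof.
move=> HM l /eigenvalueP [v Hv vN0].
have H1 : (v *m M) *m (v *m M) ^t* = (`|l| ^+ 2) *: (v *m v ^t*).
  rewrite Hv; apply/matrixP => i j; rewrite !mxE mulr_sumr; apply: eq_bigr => k _.
  rewrite !mxE rmorphM normCK; ring.
have H2 : (v *m M) *m (v *m M) ^t* = n%:R *: (v *m v ^t*).
  by rewrite tr_mul_t mulmxA -(mulmxA v) HM mul_mx_scalar -scalemxAl.
have pos := dotmx_is_dotmx vN0.
rewrite dotmxE in pos.
have : `|l| ^+ 2 = n%:R.
  have /matrixP/(_ 0 0) := etrans (esym H1) H2.
  rewrite !mxE => E; move: pos; rewrite !mxE => pos.
  exact: (mulIf (lt0r_neq0 pos)).
by move=> <-; rewrite sqrCK.
Qed.

Lemma backward n (hn : (0 < n)%N) (M : 'M[C]_n) :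
  (forall i j, `|M i j| = 1) ->
  (forall l : C, eigenvalue M l -> `|l| = sqrtC (n%:R : C)) ->
  M *m M ^t* = n%:R%:M.
Proof.
move=> Hent Heig.
have [P Pu Ptrig] := Schur M hn.
have Punit := unitarymx_unit Pu.
have PtP := unitary_l Pu.
have PPt : P *m P ^t* = 1%:M by apply/unitarymxP.
set T := conjmx P M in Ptrig.
have TE : T = P *m M *m P ^t* by rewrite /T /conjmx pinvmx_unitary.
have ME : M = P ^t* *m T *m P.
  by rewrite TE !mulmxA PtP mul1mx -mulmxA PtP mulmx1.
have eigT : forall i, `|T i i| ^+ 2 = n%:R.
  move=> i; rewrite Heig ?sqrtCK //.
  apply: (eigenvalue_conjmx (V := P)).
  - by rewrite submx_full // row_full_unit.
  - by rewrite row_free_unit.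
  change (eigenvalue (conjmx P M) (T i i)).
  rewrite eigenvalue_root_char char_poly_trig // /root horner_prod.
  by apply/prodf_eq0; exists i => //; rewrite hornerXsubC subrr.
clearbody T.
have trM : \tr (M *m M ^t*) = (n * n)%:R.
  rewrite tr_self.
  under eq_bigr => i _ do under eq_bigr => j _ do rewrite Hent expr1n.
  by rewrite sumr_const card_ord sumr_const card_ord -mulrnA.
have trT : \tr (T *m T ^t*) = \tr (M *m M ^t*).
  rewrite TE !tr_mul_t trmxCK !mulmxA -(mulmxA _ (P ^t*) P) PtP mulmx1.
  by rewrite mxtrace_mulC !mulmxA PtP mul1mx.
have sumT : \sum_i \sum_j `|T i j| ^+ 2 = \sum_i `|T i i| ^+ 2.
  rewrite -tr_self trT trM.
  under [RHS]eq_bigr do rewrite eigT.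
  by rewrite sumr_const card_ord -mulrnA.
have off0 : \sum_i \sum_(j | j != i) `|T i j| ^+ 2 = 0.
  move: sumT; under eq_bigr => i _ do rewrite (bigD1 i) //=.
  rewrite big_split /= => E; apply: (addrI (\sum_i `|T i i| ^+ 2)).
  by rewrite addr0.
have offd : forall i j, j != i -> T i j = 0.
  move=> i j ij.
  have H : forall i, true -> \sum_(j | j != i) `|T i j| ^+ 2 = 0.
    apply: psumr_eq0P off0 => k _; apply: sumr_ge0 => l _.
    exact: exprn_ge0.
  have Hi := psumr_eq0P (fun j _ => exprn_ge0 2 (normr_ge0 (T i j))) (H i isT) ij.
  by move/eqP: Hi; rewrite sqrf_eq0 normr_eq0 => /eqP.
have TT : T *m T ^t* = n%:R%:M.
  apply/matrixP => i k; rewrite !mxE (bigD1 i) //= big1 ?addr0.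
    case: (eqVneq i k) => [<-|ik]; rewrite !mxE.
      by rewrite -normCK eigT mulr1n.
    by rewrite (offd k i) ?rmorph0 ?mulr0 // eq_sym.
  by move=> j ji; rewrite !mxE offd ?mul0r.
rewrite ME !tr_mul_t trmxCK !mulmxA -(mulmxA _ P) PPt mulmx1 -(mulmxA _ T) TT.
by rewrite mul_mx_scalar -scalemxAl PtP scalemx1.
Qed.
End S.

Local Close Scope sesquilinear_scope.
Local Open Scope complex_scope.

Theorem lemma2p2 (R : realType) (n : nat) (hn : (0 < n)%N) (M : 'M[R[i]]_n) :
  complex_hadamard M <->
  ((forall i j, `|M i j| = 1) /\
   (forall lambda : R[i], eigenvalue M lambda -> `|lambda| = sqrtC (n%:R : R[i]))).
Proof.
rewrite /complex_hadamard conjTE; split=> [[H1 H2]|[H1 H2]]; split => //.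
  exact: forward.
exact: backward.
Qed.
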